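(* Let $S \geq 2$ and let $f:\{1,\dots,S\}\to\{1,\dots,S\}$ be a uniformly random map, i.e. the values $f(1),\dots,f(S)$ are independent and each is uniformly distributed on $\{1,\dots,S\}$. Define $C_1,\dots,C_S$ and $C$ as in the context. Then $$\mathrm{E}(C) < \mathrm{E}(C_1)\,(\ln S + 1),$$ and there is a constant $K>0$, independent of $S$, such that $\mathrm{Var}(C) \leq K\, S \ln S$ for all $S \geq 2$.
   Context: Setting: the random map $f$ models the state-to-state dynamics of an agent following a deterministic policy in an environment with a deterministic transition function whose prior is uniform, so that from each state $s$ the next state $f(s)$ is uniformly distributed over the $S$ states, independently across states. Construction of the cycles. Start at state $1$ and follow the orbit $1, f(1), f(f(1)),\dots$ until a previously visited state is reached for the first time; from that point the orbit is periodic, and $\mathcal{C}_1$ is the set of states on this cycle, with $C_1 = |\mathcal{C}_1|$. Inductively, for $i = 2,\dots,S$, start at state $i$ and follow its orbit under $f$ until it reaches a state already visited either earlier in this same orbit or in one of the orbits started from $1,\dots,i-1$. If it first reaches a state already visited earlier in its own orbit (call this event $T_i$; $T_1$ always occurs), the orbit from $i$ has closed a new cycle, $\mathcal{C}_i$ is the set of states on that cycle and $C_i = |\mathcal{C}_i|$. Otherwise the orbit has run into a path or cycle produced by an earlier starting state; then $\mathcal{C}_i = \emptyset$ and $C_i = 0$. Set $\mathcal{C} = \mathcal{C}_1\cup\dots\cup\mathcal{C}_S$ and $C = |\mathcal{C}| = \sum_{i=1}^S C_i$; equivalently, $C$ is the number of states lying on a cycle of $f$. All expectations and variances are taken with respect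 to the randomness of $f$, and $\ln$ denotes the natural logarithm. *)

(* Defs.v *)
From mathcomp Require Import all_boot.
From Stdlib Require Import Reals.

Set Implicit Arguments.
Unset Strict Implicit.
Unset Printing Implicit Defensive.

(* States are 'I_S = {0,...,S-1}; state "1" of the paper is the ordinal 0.
   A map f is an element of {ffun 'I_S -> 'I_S}; the uniform random map is
   the uniform distribution on these S^S maps. *)

Definition on_cycle (S : nat) (f : {ffun 'I_S -> 'I_S}) (y : 'I_S) : bool :=
  fconnect f (f y) y.

Definition Ccount (S : nat) (f : {ffun 'I_S -> 'I_S}) : nat :=
  #|[set y : 'I_S | on_cycle f y]|.

(* C_1 = size of the cycle closed by the orbit of the first state
   (the cyclic states reachable from the first state). *)
Definition C1count (S : nat) (f : {ffun 'I_S -> 'I_S}) : nat :=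
  #|[set y : 'I_S | [exists x : 'I_S, (val x == 0) && fconnect f x y]
                     && on_cycle f y]|.

Definition sumC (S : nat) : nat := \sum_(f : {ffun 'I_S -> 'I_S}) Ccount f.
Definition sumC2 (S : nat) : nat :=
  \sum_(f : {ffun 'I_S -> 'I_S}) (Ccount f * Ccount f).
Definition sumC1 (S : nat) : nat := \sum_(f : {ffun 'I_S -> 'I_S}) C1count f.

Local Open Scope R_scope.

Definition nmaps (S : nat) : R := INR (S ^ S)%nat.

Definition EC (S : nat) : R := INR (sumC S) / nmaps S.
Definition EC1 (S : nat) : R := INR (sumC1 S) / nmaps S.
Definition EC2 (S : nat) : R := INR (sumC2 S) / nmaps S.
Definition VarC (S : nat) : R := EC2 S - EC S * EC S.

(* Main.v *)
Require Import Defs.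
From mathcomp Require Import fingroup perm.
From mathcomp Require Import all_boot.
From mathcomp Require Import zify.
Set Implicit Arguments. Unset Strict Implicit. Unset Printing Implicit Defensive.

Definition follows (S k : nat) (f : {ffun 'I_S -> 'I_S}) (w : k.-tuple 'I_S)
  (nx : nat -> nat) : bool :=
  [forall i : 'I_k, f (tnth w i) == nth (tnth w i) w (nx i)].

Lemma card_presc (S k : nat) (w : k.-tuple 'I_S) (g : 'I_k -> 'I_S) : uniq w ->
  #|[pred f : {ffun 'I_S -> 'I_S} | [forall i, f (tnth w i) == g i]]| = S ^ (S - k).
Proof.
move=> Uw; have injw : injective (tnth w) := elimT (tuple_uniqP w) Uw.
pose F (x : 'I_S) : pred 'I_S :=
  if [pick i | tnth w i == x] is Some i then pred1 (g i) else predT.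
have ->: #|[pred f : {ffun 'I_S -> 'I_S} | [forall i, f (tnth w i) == g i]]|
       = #|(family F : simpl_pred {ffun 'I_S -> 'I_S})|.
  apply: eq_card => f; rewrite !inE; apply/forallP/familyP => /= H x.
  - rewrite /F; case: pickP => [i /eqP <-|] //=; exact: H.
  - have := H (tnth w x); rewrite /F; case: pickP => [i /eqP Hi|].
      by rewrite (injw _ _ Hi).
    by move/(_ x); rewrite eqxx.
rewrite card_family foldrE big_map big_enum /=.
rewrite (eq_bigr (fun x => if x \notin (w : seq _) then S else 1)); last first.
  move=> x _; rewrite /F; case: pickP => [i /eqP <-|H].
    by rewrite card1 mem_tnth.
  rewrite cardT size_enum_ord; case: ifP => //= /negbFE /tnthP [i Hi].
  by move: (H i); rewrite Hi eqxx.
rewrite -big_mkcond /= prod_nat_const.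
congr (_ ^ _).
have H := cardC (mem (w : seq _)); rewrite (card_uniqP Uw) size_tuple card_ord in H.
transitivity #|predC (mem (w : seq _))|; first by apply: eq_card => x; rewrite !inE.
set c := #|predC _| in H *; set d := S in H *; clearbody c d; lia.
Qed.
Lemma sum_follows (S k : nat) (w : k.-tuple 'I_S) nx : uniq w ->
  \sum_(f : {ffun 'I_S -> 'I_S}) (follows f w nx : nat) = S ^ (S - k).
Proof.
move=> Uw; rewrite -(card_presc (fun i => nth (tnth w i) w (nx i)) Uw) -sum1_card.
by rewrite [RHS]big_mkcond; apply: eq_bigr => f _; rewrite !inE.
Qed.

Lemma le_sum_term (I : finType) (P : pred I) (F : I -> nat) i :
  P i -> F i <= \sum_(j | P j) F j.
Proof. by move=> Pi; rewrite (bigD1 i) //= leq_addr. Qed.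

Lemma sum_eqx (T : finType) (a : T) c : \sum_(x : T) ((a == x) * c) = c.
Proof.
rewrite (bigD1 a) //= eqxx mul1n big1 ?addn0 // => x.
by rewrite eq_sym => /negbTE ->.
Qed.

Lemma Ccount_sum S (f : {ffun 'I_S -> 'I_S}) :
  Ccount f = \sum_(y : 'I_S) (on_cycle f y : nat).
Proof.
by rewrite /Ccount -sum1_card big_mkcond; apply: eq_bigr => y _; rewrite inE.
Qed.

Lemma size_orbt S (f : {ffun 'I_S -> 'I_S}) x : size (orbit f x) == (order f x).-1.+1.
Proof. by rewrite size_orbit orderSpred. Qed.
Definition orbt S (f : {ffun 'I_S -> 'I_S}) x := Tuple (size_orbt f x).

Lemma order_ltS S (f : {ffun 'I_S -> 'I_S}) x : (order f x).-1 < S.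
Proof.
rewrite orderSpred; have := max_card (mem (fconnect f x)); rewrite card_ord.
by rewrite /order.
Qed.

Lemma tnth_orbt S (f : {ffun 'I_S -> 'I_S}) x (i : 'I_(order f x).-1.+1) :
  tnth (orbt f x) i = iter i f x.
Proof.
have Hi : (i : nat) < order f x.
  by have := ltn_ord i; move: (i : nat) => n; rewrite orderSpred.
by rewrite (tnth_nth x) /= /orbit nth_traject.
Qed.

Lemma nth_orbt S (f : {ffun 'I_S -> 'I_S}) x y i : i < order f x ->
  nth y (orbt f x) i = iter i f x.
Proof.
move=> Hi; rewrite /= /orbit (set_nth_default x) ?nth_traject ?size_traject //.
Qed.

Definition cycn (m i : nat) := if i == m then 0 else i.+1.

Lemma cyc_iter S (f : {ffun 'I_S -> 'I_S}) x :
  on_cycle f x -> iter (order f x) f x = x.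
Proof. by rewrite /on_cycle fconnect_f => /(orbitPcycle 0 4). Qed.

Lemma follows_orbt S (f : {ffun 'I_S -> 'I_S}) x :
  on_cycle f x -> follows f (orbt f x) (cycn (order f x).-1).
Proof.
move=> Hc; apply/forallP => i; apply/eqP; rewrite tnth_orbt /cycn.
have Hi : (i : nat) < order f x.
  by have := ltn_ord i; move: (i : nat) => n; rewrite orderSpred.
case: ifP => /eqP Him.
  by rewrite nth_orbt // -iterS Him orderSpred cyc_iter.
rewrite nth_orbt -?iterS //.
move: Hi Him; move: (i : nat) => n; clear i; move: (order f x) => o; lia.
Qed.

Lemma card_uniq_all S n : #|[pred w : n.-tuple 'I_S | uniq w]| = S ^_ n.
Proof.
rewrite -[S in RHS]card_ord -(card_uniq_tuples n (predT : pred 'I_S)).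
apply: eq_card => w; rewrite !inE; by rewrite all_predT.
Qed.

Lemma Ccount_le S (f : {ffun 'I_S -> 'I_S}) : Ccount f <=
  \sum_(m < S) \sum_(w : m.+1.-tuple 'I_S | uniq w) (follows f w (cycn m) : nat).
Proof.
rewrite Ccount_sum.
apply: (@leq_trans (\sum_y \sum_(m < S) \sum_(w : m.+1.-tuple 'I_S | uniq w)
     ((tnth w ord0 == y) * follows f w (cycn m)))); last first.
  rewrite exchange_big; apply: leq_sum => m _; rewrite exchange_big /=.
  by apply: leq_sum => w _; rewrite sum_eqx.
apply: leq_sum => y _; case Hc: (on_cycle f y) => //=.
pose m0 := Ordinal (order_ltS f y).
rewrite (bigD1 m0) //=; apply: leq_trans (leq_addr _ _).
rewrite (bigD1 (orbt f y : m0.+1.-tuple _)) /=; last exact: orbit_uniq.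
apply: leq_trans (leq_addr _ _).
by rewrite follows_orbt // (tnth_orbt (f:=f) (x:=y) ord0) eqxx.
Qed.

Lemma sumC_le S : sumC S <= \sum_(m < S) S ^_ m.+1 * S ^ (S - m.+1).
Proof.
rewrite /sumC; apply: (@leq_trans (\sum_(f : {ffun 'I_S -> 'I_S}) \sum_(m < S)
   \sum_(w : m.+1.-tuple 'I_S | uniq w) (follows f w (cycn m) : nat))).
  by apply: leq_sum => f _; exact: Ccount_le.
rewrite exchange_big; apply: leq_sum => m _; rewrite exchange_big /=.
rewrite (eq_bigr (fun _ => S ^ (S - m.+1))); last by move=> w Uw; rewrite sum_follows.
by rewrite sum_nat_const card_uniq_all.
Qed.

Lemma follows_nth S k (f : {ffun 'I_S -> 'I_S}) (w : k.-tuple 'I_S) nx x0 i :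
  follows f w nx -> i < k -> nx i < k -> f (nth x0 w i) = nth x0 w (nx i).
Proof.
move=> /forallP /(_ (Ordinal (m:=i) _)) H Hi Hn; have /eqP := H Hi.
rewrite (tnth_nth x0) /= => ->; apply: set_nth_default; by rewrite size_tuple.
Qed.

Definition rhon (m j i : nat) := if i == m then j else i.+1.

Lemma follows_rho_iter S m (f : {ffun 'I_S -> 'I_S}) (w : m.+1.-tuple 'I_S) (j : 'I_m.+1) x0 :
  follows f w (rhon m j) -> forall i, i <= m -> nth x0 w i = iter i f (tnth w ord0).
Proof.
move=> Hf; elim=> [|i IH] Hi; first by rewrite (tnth_nth x0).
rewrite iterS -IH; last by apply: ltnW.
have Him : (i == m) = false by apply: ltn_eqF.
rewrite (follows_nth x0 Hf) /rhon ?Him //; by apply: ltnW.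
Qed.

Lemma follows_rho_loop S m (f : {ffun 'I_S -> 'I_S}) (w : m.+1.-tuple 'I_S) (j : 'I_m.+1) :
  follows f w (rhon m j) -> iter m.+1 f (tnth w ord0) = iter j f (tnth w ord0).
Proof.
move=> Hf; have x0 := tnth w ord0.
rewrite iterS -(follows_rho_iter x0 Hf (leqnn m)) (follows_nth x0 Hf) //.
  by rewrite /rhon eqxx (follows_rho_iter x0 Hf) // -ltnS.
by rewrite /rhon eqxx.
Qed.

Lemma rho_unique S m m' (f : {ffun 'I_S -> 'I_S}) (w : m.+1.-tuple 'I_S) (w' : m'.+1.-tuple 'I_S)
  (j : 'I_m.+1) (j' : 'I_m'.+1) :
  uniq w -> uniq w' -> tnth w ord0 = tnth w' ord0 ->
  follows f w (rhon m j) -> follows f w' (rhon m' j') ->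
  [/\ m = m', (w : seq _) = w' & (j : nat) = j'].
Proof.
move=> Uw Uw' H0 Hf Hf'; set z := tnth w ord0.
have E := follows_rho_iter z Hf; have E' := follows_rho_iter z Hf'.
have L := follows_rho_loop Hf; have L' := follows_rho_loop Hf'.
rewrite -H0 -/z in E' L'; rewrite -/z in E L.
have Hj := ltn_ord j; have Hj' := ltn_ord j'.
have claim : forall a b (ja : nat) (ub : b.+1.-tuple 'I_S), a < b -> uniq ub ->
    (forall i, i <= b -> nth z ub i = iter i f z) -> ja < a.+1 ->
    iter a.+1 f z = iter ja f z -> False.
  move=> a b ja ub Hab Ub Eb Hja La.
  move: La; rewrite -Eb // -Eb; last lia.
  move/eqP; rewrite nth_uniq ?size_tuple //.
  - by move/eqP=> Hja'; move: Hja; rewrite -Hja' ltnn.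
  - by apply: leq_ltn_trans (ltnW Hja) _; rewrite ltnS.
have Hmm : m = m'.
  case: (ltngtP m m') => // Hle; exfalso.
    exact: (claim m m' j w' Hle Uw' E' Hj L).
  exact: (claim m' m j' w Hle Uw E Hj' L').
subst m'.
have Hw : (w : seq _) = w'.
  apply: (@eq_from_nth _ z); first by rewrite !size_tuple.
  move=> i; rewrite size_tuple ltnS => Hi; by rewrite E // E'.
split => //.
have := L; rewrite L' -E //.
rewrite -E' // -Hw.
by move/eqP; rewrite nth_uniq ?size_tuple // => /eqP ->.
Qed.

Lemma rho_C1 S m (f : {ffun 'I_S -> 'I_S}) (w : m.+1.-tuple 'I_S) (j : 'I_m.+1) :
  uniq w -> val (tnth w ord0) == 0 -> follows f w (rhon m j) -> m.+1 - j <= C1count f.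
Proof.
move=> Uw H0 Hf; set z := tnth w ord0.
have E := follows_rho_iter z Hf; have L := follows_rho_loop Hf.
rewrite -/z in E L.
have <- : size (drop j w) = m.+1 - j by rewrite size_drop size_tuple.
rewrite -(card_uniqP (drop_uniq j Uw)) /C1count.
apply: subset_leq_card; apply/subsetP => y /(nthP z) [k Hk <-].
have Hj := ltn_ord j.
rewrite size_drop size_tuple in Hk; rewrite nth_drop E; last lia.
rewrite inE; apply/andP; split.
  by apply/existsP; exists z; rewrite H0 /=; apply: fconnect_iter.
rewrite /on_cycle.
have Hy : iter (m - j) f (f (iter (j + k) f z)) = iter (j + k) f z.
  rewrite -iterSr -iterD.
  have -> : (m - j).+1 + (j + k) = k + m.+1 by lia.
  by rewrite iterD L -iterD addnC.
by rewrite -{2}Hy; apply: fconnect_iter.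
Qed.

Lemma sum_neq0 (I : finType) (P : pred I) (F : I -> nat) :
  \sum_(i | P i) F i != 0 -> exists i, P i && (F i != 0).
Proof.
rewrite sum_nat_eq0 => /forallPn [i]; rewrite negb_imply => H; by exists i.
Qed.

Lemma sum_le_one (I : finType) (P : pred I) (F : I -> nat) b :
  (forall i j, P i -> P j -> F i != 0 -> F j != 0 -> i = j) ->
  (forall i, P i -> F i <= b) -> \sum_(i | P i) F i <= b.
Proof.
move=> Hu Hb; case: (pickP (fun i => P i && (F i != 0))) => [i /andP [Pi Fi]|H].
  rewrite (bigD1 i) //= big1 ?addn0 ?Hb // => k /andP [Pk Hki].
  apply/eqP; apply: contraR Hki => Fk; apply/eqP; exact: Hu.
by rewrite big1 // => k Pk; move: (H k); rewrite Pk /= => /negbFE /eqP.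
Qed.

Lemma bmul_neq0 (b : bool) n : b * n != 0 -> b.
Proof. by case: b. Qed.

Lemma C1count_ge S (f : {ffun 'I_S -> 'I_S}) :
  \sum_(m < S) \sum_(w : m.+1.-tuple 'I_S | uniq w && (val (tnth w ord0) == 0))
     \sum_(j : 'I_m.+1) (follows f w (rhon m j) * (m.+1 - j)) <= C1count f.
Proof.
apply: sum_le_one => [m1 m2 _ _ /sum_neq0 [w1 /andP [/andP [U1 H1] /sum_neq0 [j1 /andP [_ /bmul_neq0 F1]]]]
   /sum_neq0 [w2 /andP [/andP [U2 H2] /sum_neq0 [j2 /andP [_ /bmul_neq0 F2]]]] | m _].
  apply: val_inj => /=.
  have H12 : tnth w1 ord0 = tnth w2 ord0 by apply: val_inj; rewrite (eqP H1) (eqP H2).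
  by have [] := rho_unique U1 U2 H12 F1 F2.
apply: sum_le_one => [w1 w2 /andP [U1 H1] /andP [U2 H2] /sum_neq0 [j1 /andP [_ /bmul_neq0 F1]]
   /sum_neq0 [j2 /andP [_ /bmul_neq0 F2]] | w /andP [Uw Hw]].
  apply: val_inj => /=.
  have H12 : tnth w1 ord0 = tnth w2 ord0 by apply: val_inj; rewrite (eqP H1) (eqP H2).
  by have [] := rho_unique U1 U2 H12 F1 F2.
apply: sum_le_one => [j1 j2 _ _ /bmul_neq0 F1 /bmul_neq0 F2 | j _].
  apply: val_inj => /=.
  by have [] := rho_unique Uw Uw erefl F1 F2.
case Hf: (follows f w (rhon m j)) => //=; rewrite ?mul1n; exact: (rho_C1 Uw Hw Hf).
Qed.

Lemma card_head_sym S m (x y : 'I_S) :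
  #|[pred w : m.+1.-tuple 'I_S | uniq w && (tnth w ord0 == x)]| =
  #|[pred w : m.+1.-tuple 'I_S | uniq w && (tnth w ord0 == y)]|.
Proof.
pose s := tperm x y.
have inj : injective (fun w : m.+1.-tuple 'I_S => map_tuple s w).
  move=> a b /(congr1 val) /= /(inj_map (@perm_inj _ s)) H; exact: val_inj.
rewrite -!sum1_card (reindex_inj inj) /=; apply: eq_bigl => w.
rewrite !inE map_inj_uniq ?tnth_map; last exact: perm_inj.
by rewrite -(tpermR x y) (inj_eq (@perm_inj _ s)).
Qed.

Lemma card_head0 S m (HS : 0 < S) :
  S * #|[pred w : m.+1.-tuple 'I_S | uniq w && (val (tnth w ord0) == 0)]| = S ^_ m.+1.
Proof.
pose x0 : 'I_S := Ordinal HS.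
have -> : #|[pred w : m.+1.-tuple 'I_S | uniq w && (val (tnth w ord0) == 0)]| =
          #|[pred w : m.+1.-tuple 'I_S | uniq w && (tnth w ord0 == x0)]|.
  by apply: eq_card => w; rewrite !inE.
rewrite -card_uniq_all -[S in S * _]card_ord -sum_nat_const.
rewrite (eq_bigr (fun x => #|[pred w : m.+1.-tuple 'I_S | uniq w && (tnth w ord0 == x)]|));
  last by move=> x _; exact: card_head_sym.
rewrite -sum1_card.
rewrite (eq_bigr (fun w => \sum_(x : 'I_S) ((tnth w ord0 == x) * 1))); last first.
  by move=> w _; rewrite sum_eqx.
rewrite (exchange_big_dep xpredT) //=; apply: eq_bigr => x _.
rewrite -sum1_card big_mkcond [RHS]big_mkcond /=; apply: eq_bigr => w _.
by rewrite !inE; case: (uniq w); case: (tnth w ord0 == x).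
Qed.

Lemma tri_sum n : 2 * \sum_(j < n) (n - j) = n * n.+1.
Proof.
elim: n => [|n IH]; first by rewrite big_ord0.
rewrite big_ord_recl /= subn0.
rewrite (eq_bigr (fun j : 'I_n => n - j)); last by move=> j _; rewrite /bump /= add1n subSS.
rewrite mulnDr IH; lia.
Qed.

Lemma sumC1_ge S : 0 < S ->
  \sum_(m < S) S ^_ m.+1 * (m.+1 * m.+2) * S ^ (S - m.+1) <= 2 * S * sumC1 S.
Proof.
move=> HS.
have H1 : \sum_(m < S) #|[pred w : m.+1.-tuple 'I_S | uniq w && (val (tnth w ord0) == 0)]|
      * (\sum_(j < m.+1) (m.+1 - j)) * S ^ (S - m.+1) <= sumC1 S.
  rewrite /sumC1.
  apply: (@leq_trans (\sum_(f : {ffun 'I_S -> 'I_S}) \sum_(m < S)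
     \sum_(w : m.+1.-tuple 'I_S | uniq w && (val (tnth w ord0) == 0))
     \sum_(j : 'I_m.+1) (follows f w (rhon m j) * (m.+1 - j)))); last first.
    by apply: leq_sum => f _; exact: C1count_ge.
  rewrite exchange_big; apply: eq_leq; apply: eq_bigr => m _.
  rewrite exchange_big /= -sum1_card big_distrl big_distrl /=.
  rewrite [RHS]big_mkcond [LHS]big_mkcond; apply: eq_bigr => w _.
  rewrite inE; case Hw: (uniq w && _) => //=; rewrite mul1n big_distrl /=.
  rewrite exchange_big; apply: eq_bigr => j _.
  rewrite -big_distrl /= sum_follows; last by case/andP: Hw.
  by rewrite mulnC.
apply: leq_trans (leq_mul (leqnn (2 * S)) H1).
rewrite big_distrr /=; apply: eq_leq; apply: eq_bigr => m _.
rewrite -(card_head0 m HS) -(tri_sum m.+1).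
set a := #|_|; set b := \sum_(j < _) _.
lia.
Qed.

Definition aa (S k : nat) := S ^_ k * S ^ (S - k).

Lemma a_step S k : k * aa S k + S * aa S k.+1 = S * aa S k.
Proof.
rewrite /aa; case: (ltnP k S) => Hk.
  rewrite ffactnSr.
  have E : S - k = (S - k.+1).+1 by lia.
  have E2 : S = k + (S - k.+1).+1 by lia.
  rewrite E expnS; move: (S ^_ k) (S ^ (S - k.+1)) E2 => F P E2.
  move: (S - k.+1) E2 => d E2; subst S; nia.
rewrite (@ffact_small S k.+1) ?ltnS // mul0n muln0 addn0.
case: (ltnP S k) => H2; first by rewrite ffact_small // !mul0n !muln0.
by have -> : k = S by lia.
Qed.

Lemma sum_ka S n : \sum_(m < n) m.+1 * aa S m.+1 + S * aa S n.+1 = S * aa S 1.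
Proof.
elim: n => [|n IH]; first by rewrite big_ord0.
rewrite big_ord_recr /= -addnA a_step //.
Qed.

Lemma sum_k2a S n :
  \sum_(m < n) (m.+1 * m.+1) * aa S m.+1 + S * n * aa S n.+1 = S * \sum_(m < n) aa S m.+1.
Proof.
elim: n => [|n IH]; first by rewrite !big_ord0 !muln0.
rewrite !big_ord_recr /=.
have := a_step S n.+1; move: IH.
move: (aa S n.+1) (aa S n.+2) (\sum_(i < n) i.+1 * i.+1 * aa S i.+1) (\sum_(i < n) aa S i.+1) => A B X Y.
nia.
Qed.

Lemma aa_big S : aa S S.+1 = 0.
Proof. by rewrite /aa (@ffact_small S S.+1). Qed.

Lemma aa1 S : 0 < S -> aa S 1 = S ^ S.
Proof.
move=> HS; rewrite /aa ffactnSr mul1n subn0 -expnS; congr (_ ^ _); lia.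
Qed.

Lemma nat_part1 S : 0 < S -> sumC S + S ^ S <= 2 * sumC1 S.
Proof.
move=> HS; rewrite -(leq_pmul2l HS).
have -> : S * (2 * sumC1 S) = 2 * S * sumC1 S by rewrite mulnA (mulnC S 2).
apply: leq_trans (sumC1_ge HS).
have E1 := sum_ka S S; have E2 := sum_k2a S S.
rewrite aa_big !muln0 !addn0 aa1 // in E1 E2.
rewrite mulnDr.
apply: (@leq_trans (S * \sum_(m < S) aa S m.+1 + S * S ^ S)).
  by rewrite leq_add2r leq_mul2l sumC_le orbT.
rewrite -E2 -E1 -big_split /=; apply: eq_leq; apply: eq_bigr => m _.
rewrite /aa; nia.
Qed.

Lemma nat_C1_le S : sumC1 S <= S * S ^ S.
Proof.
rewrite /sumC1 -[S ^ S]card_ord.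
have -> : #|'I_(S ^ S)| = #|{ffun 'I_S -> 'I_S}| by rewrite card_ord card_ffun !card_ord.
rewrite mulnC -sum_nat_const; apply: leq_sum => f _.
rewrite /C1count; have := max_card [set y : 'I_S | [exists x : 'I_S, (val x == 0) && fconnect f x y]
                     && on_cycle f y]; by rewrite card_ord.
Qed.

Definition dcyc (n p i : nat) := if i == p then 0 else if i == n then p.+1 else i.+1.

Lemma nth_orbit S (f : {ffun 'I_S -> 'I_S}) x d i : i < order f x ->
  nth d (orbit f x) i = iter i f x.
Proof. by move=> Hi; rewrite /orbit (set_nth_default x) ?nth_traject ?size_traject. Qed.

Lemma size_catt S (f : {ffun 'I_S -> 'I_S}) x y :
  size (orbit f x ++ orbit f y) == (order f x + order f y).-1.+1.
Proof. by rewrite size_cat !size_orbit prednK // addn_gt0 order_gt0. Qed.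
Definition catt S (f : {ffun 'I_S -> 'I_S}) x y := Tuple (size_catt f x y).

Lemma uniq_catt S (f : {ffun 'I_S -> 'I_S}) x y :
  on_cycle f y -> y \notin orbit f x -> uniq (catt f x y).
Proof.
move=> Hy Hyx; rewrite /= cat_uniq !orbit_uniq andbT /=.
apply/hasPn => z Hz; apply/negP => Hzx.
have Hc : fcycle f (orbit f y) by rewrite -fconnect_f.
have Hzy : fconnect f z y by rewrite (fconnect_cycle Hc Hz) in_orbit.
move: Hyx; rewrite -fconnect_orbit; apply/negP/negPn.
apply: connect_trans Hzy; by rewrite fconnect_orbit.
Qed.

Lemma uniq_lt S k (w : k.+1.-tuple 'I_S) : uniq w -> k < S.
Proof.
move=> Uw; have := max_card (mem (w : seq _)); rewrite (card_uniqP Uw) size_tuple card_ord //.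
Qed.

Lemma follows_catt S (f : {ffun 'I_S -> 'I_S}) x y :
  on_cycle f x -> on_cycle f y ->
  follows f (catt f x y) (dcyc (order f x + order f y).-1 (order f x).-1).
Proof.
move=> Hx Hy; apply/forallP => i; apply/eqP.
have ox := order_gt0 f x; have oy := order_gt0 f y.
have Hi : (i : nat) < order f x + order f y.
  by have := ltn_ord i; move: (i : nat) => n; rewrite prednK // addn_gt0 ox.
rewrite (tnth_nth x) /= (set_nth_default x); last first.
  rewrite size_cat !size_orbit /dcyc; move: Hi; move: (i : nat) => n; clear i.
  move: (order f x) (order f y) ox oy => a b ha hb; case: ifP => /eqP H; first lia.
  case: ifP => /eqP H'; lia.
have Ex := cyc_iter Hx; have Ey := cyc_iter Hy.
move: Hi; move: (i : nat) => n; clear i => Hi.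
rewrite /dcyc.
case: (ltnP n (order f x)) => H1.
  have [H2|H2] := boolP (n == (order f x).-1).
    rewrite !nth_cat !size_orbit H1 ox nth_orbit // nth_orbit // -iterS.
    by rewrite (eqP H2) prednK.
  have H3 : (n == (order f x + order f y).-1) = false by apply/negbTE; apply/eqP; lia.
  rewrite H3 !nth_cat !size_orbit H1.
  have H4 : n.+1 < order f x by move/eqP: H2; lia.
  by rewrite H4 nth_orbit // nth_orbit // -iterS.
have H2 : (n == (order f x).-1) = false by apply/negbTE; apply/eqP; lia.
rewrite H2.
have [H3|H3] := boolP (n == (order f x + order f y).-1).
  have H5 : (order f x).-1.+1 < order f x = false by rewrite prednK // ltnn.
  have H6 : n < order f x = false by apply/negbTE; rewrite -leqNgt.
  rewrite !nth_cat !size_orbit H5 H6 prednK // subnn nth_orbit //; last by lia.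
  rewrite nth_orbit // -iterS.
  have -> : (n - order f x).+1 = order f y by move/eqP: H3; lia.
  by [].
have H6 : n < order f x = false by apply/negbTE; rewrite -leqNgt.
have H7 : n.+1 < order f x = false by apply/negbTE; rewrite -leqNgt; lia.
rewrite !nth_cat !size_orbit H6 H7.
rewrite nth_orbit; last by lia.
rewrite nth_orbit; last by move/eqP: H3; lia.
by rewrite -iterS subSn.
Qed.

Lemma sum_mem_uniq S k (w : k.-tuple 'I_S) : uniq w ->
  \sum_(y : 'I_S) (y \in (w : seq _) : nat) = k.
Proof.
move=> Uw; transitivity #|mem (w : seq _)|; last by rewrite (card_uniqP Uw) size_tuple.
rewrite -sum1_card [RHS]big_mkcond /=.
by apply: eq_bigr => y _; rewrite ?inE; case: (y \in (w : seq _)).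
Qed.

Lemma C2_le S (f : {ffun 'I_S -> 'I_S}) : Ccount f * Ccount f <=
  \sum_(m < S) \sum_(w : m.+1.-tuple 'I_S | uniq w) (m.+1 * follows f w (cycn m)) +
  \sum_(n < S) \sum_(p : 'I_n) \sum_(w : n.+1.-tuple 'I_S | uniq w) (follows f w (dcyc n p) : nat).
Proof.
rewrite Ccount_sum big_distrl /=.
apply: (@leq_trans (\sum_(x : 'I_S) \sum_(y : 'I_S)
   (\sum_(m < S) \sum_(w : m.+1.-tuple 'I_S | uniq w)
       ((tnth w ord0 == x) * ((y \in (w : seq _)) * follows f w (cycn m))) +
    \sum_(n < S) \sum_(p : 'I_n) \sum_(w : n.+1.-tuple 'I_S | uniq w)
       ((tnth w ord0 == x) * ((tnth w (inord p.+1) == y) * follows f w (dcyc n p)))))).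
  apply: leq_sum => x _; rewrite big_distrr /=; apply: leq_sum => y _.
  case Hx: (on_cycle f x) => //=; case Hy: (on_cycle f y) => //=.
  case: (boolP (y \in orbit f x)) => Hyx.
    apply: leq_trans (leq_addr _ _).
    pose m0 := Ordinal (order_ltS f x).
    rewrite (bigD1 m0) //=; apply: leq_trans (leq_addr _ _).
    rewrite (bigD1 (orbt f x : m0.+1.-tuple _)) /=; last exact: orbit_uniq.
    apply: leq_trans (leq_addr _ _).
    by rewrite follows_orbt // (tnth_orbt (f:=f) (x:=x) ord0) eqxx Hyx.
  apply: leq_trans (leq_addl _ _).
  have Uc := uniq_catt Hy Hyx.
  pose n0 := Ordinal (uniq_lt Uc).
  have Hp : (order f x).-1 < n0.
    rewrite /n0 /=; have := order_gt0 f x; have := order_gt0 f y; lia.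
  pose p0 := Ordinal Hp.
  rewrite (bigD1 n0) //=; apply: leq_trans (leq_addr _ _).
  rewrite (bigD1 p0) //=; apply: leq_trans (leq_addr _ _).
  rewrite (bigD1 (catt f x y : n0.+1.-tuple _)) /=; last exact: Uc.
  apply: leq_trans (leq_addr _ _).
  rewrite follows_catt //.
  rewrite (tnth_nth x) /= nth_cat size_orbit order_gt0 nth_orbit // eqxx mul1n.
  rewrite (tnth_nth x) /= inordK; last by rewrite ltnS.
  by rewrite prednK // nth_cat size_orbit ltnn subnn nth_orbit //= eqxx.
have E1 : \sum_(x : 'I_S) \sum_(y : 'I_S) \sum_(m < S) \sum_(w : m.+1.-tuple 'I_S | uniq w)
       ((tnth w ord0 == x) * ((y \in (w : seq _)) * follows f w (cycn m))) =
     \sum_(m < S) \sum_(w : m.+1.-tuple 'I_S | uniq w) (m.+1 * follows f w (cycn m)).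
  rewrite (eq_bigr (fun x => \sum_(m < S) \sum_(w : m.+1.-tuple 'I_S | uniq w) \sum_(y : 'I_S)
       ((tnth w ord0 == x) * ((y \in (w : seq _)) * follows f w (cycn m))))); last first.
    by move=> x _; rewrite exchange_big; apply: eq_bigr => m _; rewrite exchange_big.
  rewrite exchange_big; apply: eq_bigr => m _; rewrite exchange_big; apply: eq_bigr => w Uw.
  rewrite (eq_bigr (fun x => (tnth w ord0 == x) * (m.+1 * follows f w (cycn m)))); last first.
    by move=> x _; rewrite -big_distrr -big_distrl /= sum_mem_uniq.
  by rewrite sum_eqx.
have E2 : \sum_(x : 'I_S) \sum_(y : 'I_S) \sum_(n < S) \sum_(p : 'I_n) \sum_(w : n.+1.-tuple 'I_S | uniq w)
       ((tnth w ord0 == x) * ((tnth w (inord p.+1) == y) * follows f w (dcyc n p))) =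
     \sum_(n < S) \sum_(p : 'I_n) \sum_(w : n.+1.-tuple 'I_S | uniq w) (follows f w (dcyc n p) : nat).
  rewrite (eq_bigr (fun x => \sum_(n < S) \sum_(p : 'I_n) \sum_(w : n.+1.-tuple 'I_S | uniq w) \sum_(y : 'I_S)
       ((tnth w ord0 == x) * ((tnth w (inord p.+1) == y) * follows f w (dcyc n p))))); last first.
    move=> x _; rewrite exchange_big; apply: eq_bigr => n _; rewrite exchange_big.
    by apply: eq_bigr => p _; rewrite exchange_big.
  rewrite exchange_big; apply: eq_bigr => n _; rewrite exchange_big; apply: eq_bigr => p _.
  rewrite exchange_big; apply: eq_bigr => w Uw.
  rewrite (eq_bigr (fun x => (tnth w ord0 == x) * follows f w (dcyc n p))); last first.
    by move=> x _; rewrite -big_distrr /= sum_eqx.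
  by rewrite sum_eqx.
rewrite -E1 -E2 -big_split /=; apply: eq_leq; apply: eq_bigr => x _; by rewrite big_split.
Qed.


Lemma nat_C2 S : 0 < S -> sumC2 S <= 2 * S * S ^ S.
Proof.
move=> HS; rewrite /sumC2.
apply: (@leq_trans (\sum_(f : {ffun 'I_S -> 'I_S})
  (\sum_(m < S) \sum_(w : m.+1.-tuple 'I_S | uniq w) (m.+1 * follows f w (cycn m)) +
  \sum_(n < S) \sum_(p : 'I_n) \sum_(w : n.+1.-tuple 'I_S | uniq w) (follows f w (dcyc n p) : nat)))).
  by apply: leq_sum => f _; exact: C2_le.
rewrite big_split /=.
have E1 : \sum_(f : {ffun 'I_S -> 'I_S}) \sum_(m < S) \sum_(w : m.+1.-tuple 'I_S | uniq w)
   (m.+1 * follows f w (cycn m)) = \sum_(m < S) m.+1 * aa S m.+1.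
  rewrite exchange_big; apply: eq_bigr => m _; rewrite exchange_big /=.
  rewrite (eq_bigr (fun _ => m.+1 * S ^ (S - m.+1))); last first.
    by move=> w Uw; rewrite -big_distrr /= sum_follows.
  by rewrite sum_nat_const card_uniq_all /aa mulnCA mulnA.
have E2 : \sum_(f : {ffun 'I_S -> 'I_S}) \sum_(n < S) \sum_(p : 'I_n)
   \sum_(w : n.+1.-tuple 'I_S | uniq w) (follows f w (dcyc n p) : nat) = \sum_(n < S) n * aa S n.+1.
  rewrite exchange_big; apply: eq_bigr => n _; rewrite exchange_big /=.
  rewrite (eq_bigr (fun _ => S ^_ n.+1 * S ^ (S - n.+1))); last first.
    move=> p _; rewrite exchange_big /=.
    rewrite (eq_bigr (fun _ => S ^ (S - n.+1))); last by move=> w Uw; rewrite sum_follows.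
    by rewrite sum_nat_const card_uniq_all.
  by rewrite sum_nat_const card_ord /aa.
rewrite E1 E2.
have E3 := sum_ka S S; rewrite aa_big muln0 addn0 aa1 // in E3.
have : \sum_(n < S) n * aa S n.+1 <= \sum_(m < S) m.+1 * aa S m.+1.
  by apply: leq_sum => n _; rewrite leq_mul2r leqnSn orbT.
lia.
Qed.

From Stdlib Require Import Reals Lra Psatz.
Set Implicit Arguments.
Open Scope R_scope.

Lemma INR_addn (a b : nat) : INR (addn a b) = INR a + INR b.
Proof. change (addn a b) with (Nat.add a b); apply: plus_INR. Qed.
Lemma INR_muln (a b : nat) : INR (muln a b) = INR a * INR b.
Proof. change (muln a b) with (Nat.mul a b); apply: mult_INR. Qed.
Lemma INR_leq {a b : nat} : (a <= b)%nat -> INR a <= INR b.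
Proof. by move/leP; apply: le_INR. Qed.

Lemma pow_expn (a b : nat) : Nat.pow a b = expn a b.
Proof. elim: b => [|b IH] //=; by rewrite IH expnS. Qed.

Lemma nmaps_pos S : (0 < S)%nat -> 0 < nmaps S.
Proof. move=> HS; rewrite /nmaps pow_expn; apply: lt_0_INR; apply/ltP; by rewrite expn_gt0 HS. Qed.

Lemma ln_ge_half S : (2 <= S)%nat -> / 2 < ln (INR S).
Proof.
move=> HS; apply: Rlt_le_trans ln_lt_2 _.
have H2 : 2 <= INR S by have := INR_leq HS; rewrite /=; lra.
case: (Rle_lt_or_eq_dec _ _ H2) => H; last by rewrite -H; lra.
by apply: Rlt_le; apply: ln_increasing; lra.
Qed.

Lemma ln_ge_1 S : (3 <= S)%nat -> 1 <= ln (INR S).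
Proof.
move=> HS; have H3 : 3 <= INR S by have := INR_leq HS; rewrite /=; lra.
have He := exp_le_3; rewrite -(ln_exp 1).
have He0 : 0 < exp 1 by apply: exp_pos.
case: (Rle_lt_or_eq_dec (exp 1) (INR S) ltac:(lra)) => H; last by rewrite H; lra.
by apply: Rlt_le; apply: ln_increasing.
Qed.

Theorem lemma1 :
  (forall S : nat, (2 <= S)%nat -> EC S < EC1 S * (ln (INR S) + 1)) /\
  (exists K : R, 0 < K /\
     forall S : nat, (2 <= S)%nat -> VarC S <= K * INR S * ln (INR S)).
Proof.
split.
  move=> S HS; have HS0 : (0 < S)%nat by lia.
  have HN := @nmaps_pos S HS0.
  have H1 := INR_leq (@nat_part1 S HS0); rewrite INR_addn INR_muln in H1.
  have H2 := INR_leq (nat_C1_le S); rewrite INR_muln in H2.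
  have Hc0 : 0 <= INR (sumC S) by apply: pos_INR.
  have Ec : EC S * nmaps S = INR (sumC S) by rewrite /EC; field; lra.
  have Ec1 : EC1 S * nmaps S = INR (sumC1 S) by rewrite /EC1; field; lra.
  rewrite /nmaps pow_expn in HN Ec Ec1.
  set N := INR (expn S S) in HN Ec Ec1 H1 H2.
  set c := EC S in Ec *; set c1 := EC1 S in Ec1 *.
  have A1 : c + 1 <= 2 * c1.
    have I2 : INR 2 = 2 by simpl; lra.
    apply: (Rmult_le_reg_r N) => //; rewrite Rmult_plus_distr_r Ec Rmult_assoc Ec1; rewrite I2 in H1; lra.
  have A2 : c1 <= INR S.
    apply: (Rmult_le_reg_r N) => //; rewrite Ec1; lra.
  have A0 : 0 <= c.
    apply: (Rmult_le_reg_r N) => //; rewrite Ec; lra.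
  case: (ltnP S 3) => H3.
    have ES : INR S = 2 by have -> : S = 2%nat by lia.
    have Hl := ln_lt_2; rewrite ES in A2 *.
    have : 0 < c1 * (ln 2 - / 2) by apply: Rmult_lt_0_compat; lra.
    nra.
  have Hl := @ln_ge_1 S H3.
  have : c1 * 1 <= c1 * ln (INR S) by apply: Rmult_le_compat_l; lra.
  nra.
exists 4; split; first lra.
move=> S HS; have HS0 : (0 < S)%nat by lia.
have HN := @nmaps_pos S HS0.
have H1 := INR_leq (@nat_C2 S HS0); rewrite !INR_muln in H1.
have Ec2 : EC2 S * nmaps S = INR (sumC2 S) by rewrite /EC2; field; lra.
rewrite /nmaps pow_expn in HN Ec2.
have A : EC2 S <= 2 * INR S.
  apply: (Rmult_le_reg_r (INR (expn S S))) => //; rewrite Ec2; move: H1; rewrite /=; lra.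
have Hl := @ln_ge_half S HS.
have HSr : 0 < INR S by apply: lt_0_INR; apply/ltP.
rewrite /VarC.
have : 0 <= EC S * EC S by apply: Rle_0_sqr.
have : INR S * / 2 < INR S * ln (INR S) by apply: Rmult_lt_compat_l.
nra.
Qed.
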